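(* Consider the asynchronous network Newton method described in the context with $n\ge2$ and stepsize $0<\varepsilon<\min\{1,2(\lambda/\Lambda)^2\}$, and let $\beta=\frac{\alpha m\varepsilon(2\lambda^2-\varepsilon\Lambda^2)}{n\lambda}\in(0,1)$. Then for all $t\ge1$, $$\mathbb{E}\Big[\big\|D(t-1)^{1/2}(x(t)-x^* )\big\|\Big]\le\left(\frac{2\,(2(1-\delta)+\alpha M)\,(1-\beta)^t}{\alpha m}\big(F(x(0))-F^*\big)\right)^{1/2};$$ in particular this sequence converges to $0$ linearly (in expectation).
   Context: Setup. Let $n\ge 1$ be the number of agents and $\alpha>0$ a scalar. $W\in\mathbb{R}^{n\times n}$ is a symmetric nonnegative matrix with $W\mathbb{1}=\mathbb{1}$ (where $\mathbb{1}$ is the all-ones vector), $\mathrm{null}(I-W)=\mathrm{span}\{\mathbb{1}\}$, $0\le W_{ij}<1$ for all $i,j$, and $\delta\le W_{ii}\le\Delta$ for all $i$, for constants $0<\delta\le\Delta<1$. Each $f_i:\mathbb{R}\to\mathbb{R}$ is twice continuously differentiable with $0<m\le f_i''(s)\le M<\infty$ for all $s$ and $|f_i''(a)-f_i''(b)|\le L|a-b|$ for all $a,b$. Define $F(x)=\frac12 x^T(I-W)x+\alpha\sum_{i=1}^n f_i(x_i)$ for $x\in\mathbb{R}^n$, with minimum value $F^*$ and minimizer $x^*$. Let $g(x)=\nabla F(x)$, $G(x)=\mathrm{diag}(f_1''(x_1),\dots,f_n''(x_n))$, $H(x)=\nabla^2F(x)=I-W+\alpha G(x)$. Let $W_d$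 be the diagonal matrix with $[W_d]_{ii}=W_{ii}$, and set $D(x)=\alpha G(x)+2(I-W_d)$ (diagonal, positive definite) and $B=I-2W_d+W$, so $H(x)=D(x)-B$. Define the approximate Hessian inverse $\hat H(x)^{-1}=D(x)^{-1/2}\big(I+D(x)^{-1/2}BD(x)^{-1/2}\big)D(x)^{-1/2}$. Constants: $\rho=\frac{2(1-\delta)}{2(1-\delta)+\alpha m}$, $\Lambda=\frac{1+\rho}{2(1-\Delta)+\alpha m}$, $\lambda=\frac{1}{2(1-\delta)+\alpha M}$. Algorithm (asynchronous network Newton). Given $x(0)\in\mathbb{R}^n$ and stepsize $\varepsilon>0$, let $\Phi(1),\Phi(2),\dots$ be i.i.d. random diagonal $n\times n$ matrices, each equal to $e_ie_i^T$ (the matrix with a single $1$ in position $(i,i)$ and zeros elsewhere) with probability $1/n$ for each $i=1,\dots,n$ (i.e., one uniformly random agent is active per iteration). The iterates are $x(t)=x(t-1)-\varepsilon\,\Phi(t)\hat H(x(t-1))^{-1}g(x(t-1))$, $t\ge1$. Write $g(t)=g(x(t))$, $D(t)=D(x(t))$, $H(t)=H(x(t))$, $\hat H(t)^{-1}=\hat H(x(t))^{-1}$. $\mathcal{F}_t$ denotes the $\sigma$-field generated by $\Phi(1),\dots,\Phi(t)$ (so $x(t)$ is $\mathcal{F}_t$-measurable). *)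

(* Defs.v *)
(* classical reals. Vectors in R^n are functions nat -> R,
   only indices 0..n-1 are meaningful; n x n matrices are nat -> nat -> R. *)
From Stdlib Require Import Reals List.
Open Scope R_scope.

Fixpoint rsum (n : nat) (f : nat -> R) : R :=
  match n with O => 0 | S k => rsum k f + f k end.

Definition vec := nat -> R.

Definition Fobj (n : nat) (W : nat -> nat -> R) (alpha : R) (f : nat -> R -> R)
  (x : vec) : R :=
  / 2 * rsum n (fun i => x i * (x i - rsum n (fun j => W i j * x j)))
  + alpha * rsum n (fun i => f i (x i)).

(* g(x) = grad F(x) = (I - W) x + alpha (f_i'(x_i))_i ; f1 i = f_i' *)
Definition grad (n : nat) (W : nat -> nat -> R) (alpha : R) (f1 : nat -> R -> R)
  (x : vec) : vec :=
  fun i => x i - rsum n (fun j => W i j * x j) + alpha * f1 i (x i).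

(* D(x) = alpha G(x) + 2 (I - W_d), as its diagonal; f2 i = f_i'' *)
Definition Ddiag (W : nat -> nat -> R) (alpha : R) (f2 : nat -> R -> R)
  (x : vec) : vec :=
  fun i => alpha * f2 i (x i) + 2 * (1 - W i i).

Definition kron (i j : nat) : R := if Nat.eqb i j then 1 else 0.

Definition Bmat (W : nat -> nat -> R) (i j : nat) : R :=
  kron i j - 2 * (kron i j * W i i) + W i j.

(* Hhat(x)^{-1} v = D^{-1/2} (I + D^{-1/2} B D^{-1/2}) D^{-1/2} v *)
Definition Hinv_apply (n : nat) (W : nat -> nat -> R) (alpha : R)
  (f2 : nat -> R -> R) (x v : vec) : vec :=
  let d := Ddiag W alpha f2 x in
  let w := fun j => / sqrt (d j) * v j in
  fun i => / sqrt (d i) *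
    (w i + rsum n (fun j => / sqrt (d i) * Bmat W i j * / sqrt (d j) * w j)).

(* one iteration with Phi = e_i e_i^T (agent i active) *)
Definition step (n : nat) (W : nat -> nat -> R) (alpha : R)
  (f1 f2 : nat -> R -> R) (eps : R) (x : vec) (i : nat) : vec :=
  fun k => x k - eps * (kron k i * Hinv_apply n W alpha f2 x (grad n W alpha f1 x) k).

(* x(t) along the realisation l = [i_1; ...; i_t] of Phi(1), ..., Phi(t) *)
Definition run (n : nat) (W : nat -> nat -> R) (alpha : R)
  (f1 f2 : nat -> R -> R) (eps : R) (x0 : vec) (l : list nat) : vec :=
  fold_left (step n W alpha f1 f2 eps) l x0.

Fixpoint seqsum (n t : nat) (Z : list nat -> R) : R :=
  match t with
  | O => Z nil
  | S k => rsum n (fun i => seqsum n k (fun l => Z (i :: l)))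
  end.

(* expectation of Z(Phi(1),...,Phi(t)) for Phi i.i.d. uniform over the n agents *)
Definition expect (n t : nat) (Z : list nat -> R) : R :=
  seqsum n t Z / (INR n ^ t).

(* Main.v *)
Require Import Defs.
From Stdlib Require Import Reals List Lra Lia Psatz.
Open Scope R_scope.

Lemma dlim_ext f g x l l' : (forall y, f y = g y) -> l = l' -> derivable_pt_lim f x l -> derivable_pt_lim g x l'.
Proof.
  intros H <- D eps He. destruct (D eps He) as [d Hd]. exists d. intros hh H1 H2.
  rewrite <- !H. apply Hd; auto.
Qed.

Lemma taylor_up (h h1 h2 : R -> R) (K a b : R) :
 (forall x, derivable_pt_lim h x (h1 x)) -> (forall x, derivable_pt_lim h1 x (h2 x)) -> (forall x, h2 x <= K) ->
 h b - h a - (b - a) * h1 a <= K * (b - a)^2 / 2.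
Proof.
  intros D1 D2 HK.
  set (psi := fun x => h x - (x - a) * h1 a - K * ((x-a)*(x-a)) / 2).
  set (psi1 := fun x => h1 x - h1 a - K*(x-a)).
  assert (Dp : forall x, derivable_pt_lim psi x (psi1 x)).
  { intro x. eapply dlim_ext with (f := (h - (id - fct_cte a) * fct_cte (h1 a) - mult_real_fct (K/2) ((id - fct_cte a) * (id - fct_cte a)))%F).
    3: repeat first [apply derivable_pt_lim_minus | apply derivable_pt_lim_mult | apply derivable_pt_lim_scal
        | apply derivable_pt_lim_id | apply derivable_pt_lim_const | apply D1].
    - intro y. unfold psi, minus_fct, mult_fct, mult_real_fct, fct_cte, id. field.
    - unfold psi1, minus_fct, mult_fct, fct_cte, id. field. }
  assert (Dp1 : forall x, derivable_pt_lim psi1 x (h2 x - K)).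
  { intro x. eapply dlim_ext with (f := (h1 - fct_cte (h1 a) - mult_real_fct K (id - fct_cte a))%F).
    3: repeat first [apply derivable_pt_lim_minus | apply derivable_pt_lim_mult | apply derivable_pt_lim_scal
        | apply derivable_pt_lim_id | apply derivable_pt_lim_const | apply D2].
    - intro y. unfold psi1, minus_fct, mult_real_fct, fct_cte, id. ring.
    - unfold fct_cte, id. ring. }
  assert (psi b <= psi a).
  { destruct (Rtotal_order a b) as [Hab|[Hab|Hab]].
    - destruct (MVT_cor2 psi psi1 a b Hab (fun c _ => Dp c)) as [c [Hc Hc']].
      destruct (MVT_cor2 psi1 (fun x => h2 x - K) a c (proj1 Hc') (fun c _ => Dp1 c)) as [c' [Hc2 Hc2']].
      assert (psi1 a = 0) by (unfold psi1; ring).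
      assert (h2 c' - K <= 0) by (specialize (HK c'); lra).
      assert (psi1 c <= 0) by nra. nra.
    - subst; lra.
    - destruct (MVT_cor2 psi psi1 b a Hab (fun c _ => Dp c)) as [c [Hc Hc']].
      destruct (MVT_cor2 psi1 (fun x => h2 x - K) c a (proj2 Hc') (fun c _ => Dp1 c)) as [c' [Hc2 Hc2']].
      assert (psi1 a = 0) by (unfold psi1; ring).
      assert (h2 c' - K <= 0) by (specialize (HK c'); lra).
      assert (psi1 c >= 0) by nra. nra. }
  unfold psi in H. lra.
Qed.

Lemma taylor_low (h h1 h2 : R -> R) (k a b : R) :
 (forall x, derivable_pt_lim h x (h1 x)) -> (forall x, derivable_pt_lim h1 x (h2 x)) -> (forall x, k <= h2 x) ->
 k * (b - a)^2 / 2 <= h b - h a - (b - a) * h1 a.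
Proof.
  intros D1 D2 Hk.
  assert (H := taylor_up (fun x => - h x) (fun x => - h1 x) (fun x => - h2 x) (-k) a b).
  assert (- h b - - h a - (b - a) * - h1 a <= - k * (b - a) ^ 2 / 2); [|lra].
  apply H.
  - intro x. apply derivable_pt_lim_opp, D1.
  - intro x. apply derivable_pt_lim_opp, D2.
  - intro x. specialize (Hk x). lra.
Qed.

Lemma rsum_ext n f g : (forall i, (i < n)%nat -> f i = g i) -> rsum n f = rsum n g.
Proof. induction n; simpl; intros H; auto. rewrite IHn, H; auto. Qed.

Lemma rsum_le n f g : (forall i, (i < n)%nat -> f i <= g i) -> rsum n f <= rsum n g.
Proof. induction n; simpl; intros H; [lra|]. specialize (IHn (fun i Hi => H i ltac:(lia))). specialize (H n ltac:(lia)). lra. Qed.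

Lemma rsum_plus n f g : rsum n (fun i => f i + g i) = rsum n f + rsum n g.
Proof. induction n; simpl; [ring|]. rewrite IHn; ring. Qed.

Lemma rsum_minus n f g : rsum n (fun i => f i - g i) = rsum n f - rsum n g.
Proof. induction n; simpl; [ring|]. rewrite IHn; ring. Qed.

Lemma rsum_scal n c f : rsum n (fun i => c * f i) = c * rsum n f.
Proof. induction n; simpl; [ring|]. rewrite IHn; ring. Qed.

Lemma rsum_const n c : rsum n (fun _ => c) = INR n * c.
Proof. induction n; [simpl; ring|]. change (rsum (S n) (fun _ => c)) with (rsum n (fun _ => c) + c). rewrite IHn, S_INR; ring. Qed.

Lemma rsum_nonneg n f : (forall i, (i < n)%nat -> 0 <= f i) -> 0 <= rsum n f.
Proof. intros H. replace 0 with (rsum n (fun _ => 0)). apply rsum_le; auto. rewrite rsum_const; ring. Qed.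

Lemma rsum_swap n m f : rsum n (fun i => rsum m (fun j => f i j)) = rsum m (fun j => rsum n (fun i => f i j)).
Proof.
  induction n; simpl.
  - rewrite rsum_const; ring.
  - rewrite IHn, <- rsum_plus. reflexivity.
Qed.

Lemma kron_sym i j : kron i j = kron j i.
Proof. unfold kron. rewrite Nat.eqb_sym. reflexivity. Qed.

Lemma rsum_kron n i h : (i < n)%nat -> rsum n (fun j => kron j i * h j) = h i.
Proof.
  induction n; simpl; intros Hi; [lia|].
  unfold kron at 2. destruct (Nat.eqb_spec n i).
  - subst. rewrite (rsum_ext i _ (fun _ => 0)). rewrite rsum_const; ring.
    intros j Hj. unfold kron. destruct (Nat.eqb_spec j i); [lia|ring].
  - rewrite IHn by lia. ring.
Qed.

Lemma rsum_kron' n i h : (i < n)%nat -> rsum n (fun j => kron i j * h j) = h i.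
Proof. intros. rewrite <- (rsum_kron n i h) by auto. apply rsum_ext; intros; rewrite kron_sym; auto. Qed.

Definition dot n (u v : vec) := rsum n (fun i => u i * v i).
Definition Wv n (W : nat -> nat -> R) (v : vec) i := rsum n (fun j => W i j * v j).
Definition bil n W (u v : vec) := rsum n (fun i => u i * Wv n W v i).

Section Prob.
Variables (n : nat) (W : nat -> nat -> R) (alpha : R) (f f1 f2 : nat -> R -> R) (m M delta Delta : R).
Hypothesis halpha : 0 < alpha.
Hypothesis hdelta : 0 < delta.
Hypothesis hdD : delta <= Delta.
Hypothesis hDelta : Delta < 1.
Hypothesis hWsym : forall i j, (i < n)%nat -> (j < n)%nat -> W i j = W j i.
Hypothesis hWnn : forall i j, (i < n)%nat -> (j < n)%nat -> 0 <= W i j.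
Hypothesis hWrow : forall i, (i < n)%nat -> rsum n (fun j => W i j) = 1.
Hypothesis hWdiag : forall i, (i < n)%nat -> delta <= W i i <= Delta.
Hypothesis hf1 : forall i s, (i < n)%nat -> derivable_pt_lim (f i) s (f1 i s).
Hypothesis hf2 : forall i s, (i < n)%nat -> derivable_pt_lim (f1 i) s (f2 i s).
Hypothesis hm : 0 < m.
Hypothesis hmM : forall i s, (i < n)%nat -> m <= f2 i s <= M.

Lemma Wv_plus u v i : Wv n W (fun k => u k + v k) i = Wv n W u i + Wv n W v i.
Proof. unfold Wv. rewrite <- rsum_plus. apply rsum_ext; intros; ring. Qed.

Lemma bil_sym u v : bil n W u v = bil n W v u.
Proof.
  unfold bil, Wv.
  transitivity (rsum n (fun i => rsum n (fun j => u i * (W i j * v j)))).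
  { apply rsum_ext; intros. rewrite rsum_scal. reflexivity. }
  rewrite rsum_swap. apply rsum_ext; intros j Hj. rewrite <- rsum_scal.
  apply rsum_ext; intros i Hi. rewrite hWsym by auto. ring.
Qed.

Lemma colsum j : (j < n)%nat -> rsum n (fun i => W i j) = 1.
Proof. intros Hj. rewrite <- (hWrow j Hj). apply rsum_ext; intros. apply hWsym; auto. Qed.

Lemma psd_W d : 0 <= dot n d d - bil n W d d.
Proof.
  assert (E : rsum n (fun i => rsum n (fun j => W i j * (d i - d j)^2)) =
    rsum n (fun i => d i ^ 2 * rsum n (fun j => W i j)) + rsum n (fun i => rsum n (fun j => W i j * d j ^ 2))
    - 2 * bil n W d d).
  { unfold bil, Wv. rewrite <- rsum_scal, <- rsum_plus, <- rsum_minus. apply rsum_ext; intros i Hi.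
    rewrite <- !rsum_scal, <- rsum_plus, <- rsum_minus. apply rsum_ext; intros; ring. }
  rewrite (rsum_swap n n (fun i j => W i j * d j ^ 2)) in E.
  rewrite (rsum_ext n (fun i => d i ^ 2 * rsum n (fun j => W i j)) (fun i => d i * d i)) in E
    by (intros; rewrite hWrow by auto; ring).
  rewrite (rsum_ext n (fun j => rsum n (fun i => W i j * d j ^ 2)) (fun i => d i * d i)) in E.
  2:{ intros j Hj. rewrite (rsum_ext n _ (fun i => d j ^ 2 * W i j)) by (intros; ring).
      rewrite rsum_scal, colsum by auto; ring. }
  assert (0 <= rsum n (fun i => rsum n (fun j => W i j * (d i - d j) ^ 2))).
  { apply rsum_nonneg; intros i Hi; apply rsum_nonneg; intros j Hj. apply Rmult_le_pos; [auto | apply pow2_ge_0]. }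
  unfold dot. lra.
Qed.

Lemma Fobj_ext x y : (forall k, (k < n)%nat -> x k = y k) -> Fobj n W alpha f x = Fobj n W alpha f y.
Proof.
  intros H. unfold Fobj. f_equal; [f_equal|f_equal]; apply rsum_ext; intros k Hk; rewrite H by auto; try reflexivity.
  f_equal. f_equal. apply rsum_ext; intros; rewrite H; auto.
Qed.

Lemma F_expand x d : Fobj n W alpha f (fun k => x k + d k) =
  Fobj n W alpha f x + dot n (grad n W alpha f1 x) d + / 2 * (dot n d d - bil n W d d)
  + alpha * rsum n (fun k => f k (x k + d k) - f k (x k) - f1 k (x k) * d k).
Proof.
  unfold Fobj, dot, grad.
  assert (E1 : rsum n (fun i => (x i + d i) * (x i + d i - rsum n (fun j => W i j * (x j + d j)))) =
     rsum n (fun i => x i * (x i - rsum n (fun j => W i j * x j))) + 2 * rsum n (fun i => d i * (x i - Wv n W x i))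
     + (rsum n (fun i => d i * d i) - bil n W d d) + (bil n W d x - bil n W x d)).
  { unfold bil. rewrite <- rsum_scal, <- !rsum_minus, <- !rsum_plus. apply rsum_ext; intros i Hi.
    fold (Wv n W (fun j => x j + d j) i). rewrite Wv_plus. unfold Wv. ring. }
  rewrite E1, (bil_sym d x).
  assert (E2 : rsum n (fun i => f i (x i + d i)) = rsum n (fun i => f i (x i)) + rsum n (fun i => f1 i (x i) * d i)
     + rsum n (fun k => f k (x k + d k) - f k (x k) - f1 k (x k) * d k)).
  { rewrite <- !rsum_plus. apply rsum_ext; intros; ring. }
  assert (E3 : rsum n (fun i => (x i - rsum n (fun j => W i j * x j) + alpha * f1 i (x i)) * d i) =
     rsum n (fun i => d i * (x i - Wv n W x i)) + alpha * rsum n (fun i => f1 i (x i) * d i)).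
  { rewrite <- rsum_scal, <- rsum_plus. apply rsum_ext; intros; unfold Wv; ring. }
  rewrite E2, E3. field.
Qed.

Lemma F_upper x d : Fobj n W alpha f (fun k => x k + d k) <=
  Fobj n W alpha f x + dot n (grad n W alpha f1 x) d + / 2 * (dot n d d - bil n W d d) + alpha * M / 2 * dot n d d.
Proof.
  rewrite F_expand.
  assert (rsum n (fun k => f k (x k + d k) - f k (x k) - f1 k (x k) * d k) <= M / 2 * dot n d d).
  { unfold dot. rewrite <- rsum_scal. apply rsum_le; intros k Hk.
    pose proof (taylor_up (f k) (f1 k) (f2 k) M (x k) (x k + d k) (fun s => hf1 k s Hk) (fun s => hf2 k s Hk)
      (fun s => proj2 (hmM k s Hk))).
    replace (x k + d k - x k) with (d k) in H by ring. lra. }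
  assert (alpha * rsum n (fun k => f k (x k + d k) - f k (x k) - f1 k (x k) * d k) <= alpha * (M / 2 * dot n d d))
    by (apply Rmult_le_compat_l; lra).
  lra.
Qed.

Lemma F_lower x d : Fobj n W alpha f x + dot n (grad n W alpha f1 x) d + alpha * m / 2 * dot n d d
  <= Fobj n W alpha f (fun k => x k + d k).
Proof.
  rewrite F_expand.
  assert (m / 2 * dot n d d <= rsum n (fun k => f k (x k + d k) - f k (x k) - f1 k (x k) * d k)).
  { unfold dot. rewrite <- rsum_scal. apply rsum_le; intros k Hk.
    pose proof (taylor_low (f k) (f1 k) (f2 k) m (x k) (x k + d k) (fun s => hf1 k s Hk) (fun s => hf2 k s Hk)
      (fun s => proj1 (hmM k s Hk))).
    replace (x k + d k - x k) with (d k) in H by ring. lra. }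
  assert (alpha * (m / 2 * dot n d d) <= alpha * rsum n (fun k => f k (x k + d k) - f k (x k) - f1 k (x k) * d k))
    by (apply Rmult_le_compat_l; lra).
  pose proof (psd_W d). lra.
Qed.

Lemma F_coord x i s : (i < n)%nat ->
  Fobj n W alpha f (fun k => x k + s * kron k i) <=
  Fobj n W alpha f x + s * grad n W alpha f1 x i + s ^ 2 / 2 * (1 - W i i + alpha * M).
Proof.
  intros Hi. eapply Rle_trans; [apply F_upper|].
  assert (E1 : dot n (grad n W alpha f1 x) (fun k => s * kron k i) = s * grad n W alpha f1 x i).
  { unfold dot. rewrite <- (rsum_kron n i (fun k => s * grad n W alpha f1 x k)) by auto.
    apply rsum_ext; intros; ring. }
  assert (E2 : dot n (fun k => s * kron k i) (fun k => s * kron k i) = s ^ 2).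
  { unfold dot. rewrite (rsum_ext n _ (fun k => kron k i * (s^2 * kron k i))) by (intros; ring).
    rewrite rsum_kron by auto. unfold kron; rewrite Nat.eqb_refl; ring. }
  assert (E3 : bil n W (fun k => s * kron k i) (fun k => s * kron k i) = s ^ 2 * W i i).
  { unfold bil, Wv. rewrite (rsum_ext n _ (fun k => kron k i * (s ^ 2 * W k i))).
    rewrite rsum_kron by auto; ring.
    intros k Hk. rewrite (rsum_ext n _ (fun j => kron j i * (s * W k j))) by (intros; ring).
    rewrite rsum_kron by auto. ring. }
  rewrite E1, E2, E3. lra.
Qed.

Lemma Mpos : (0 < n)%nat -> 0 < M.
Proof. intros Hn. pose proof (hmM 0 0 Hn). lra. Qed.

Variable xs : vec.
Hypothesis hxs : forall y : vec, Fobj n W alpha f xs <= Fobj n W alpha f y.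

Lemma grad_xs i : (i < n)%nat -> grad n W alpha f1 xs i = 0.
Proof.
  intros Hi. set (g := grad n W alpha f1 xs i).
  pose proof (hmM i 0 Hi). pose proof (hWdiag i Hi).
  set (c := 1 - W i i + alpha * M).
  assert (Hc : 0 < c) by (unfold c; assert (0 < alpha * M) by (apply Rmult_lt_0_compat; lra); lra).
  pose proof (F_coord xs i (- g / c) Hi). fold g in H1. fold c in H1.
  pose proof (hxs (fun k => xs k + - g / c * kron k i)).
  assert (E : - g / c * g + (- g / c) ^ 2 / 2 * c = - (g * g) * / (2 * c)) by (field; lra).
  assert (0 < / (2 * c)) by (apply Rinv_0_lt_compat; lra).
  clearbody g c.
  assert (g * g * / (2 * c) <= 0) by lra.
  assert (g * g <= 0).
  { apply (Rmult_le_reg_r (/ (2 * c))); lra. }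
  nra.
Qed.

Lemma dist_bound x : alpha * m / 2 * dot n (fun k => x k - xs k) (fun k => x k - xs k)
  <= Fobj n W alpha f x - Fobj n W alpha f xs.
Proof.
  pose proof (F_lower xs (fun k => x k - xs k)).
  cbv beta in H. rewrite (Fobj_ext (fun k => xs k + (x k - xs k)) x) in H by (intros; ring).
  assert (dot n (grad n W alpha f1 xs) (fun k => x k - xs k) = 0).
  { unfold dot. rewrite (rsum_ext n _ (fun _ => 0)). rewrite rsum_const; ring.
    intros; rewrite grad_xs by auto; ring. }
  lra.
Qed.

Lemma grad_bound x : 2 * alpha * m * (Fobj n W alpha f x - Fobj n W alpha f xs)
  <= dot n (grad n W alpha f1 x) (grad n W alpha f1 x).
Proof.
  pose proof (F_lower x (fun k => xs k - x k)).
  cbv beta in H. rewrite (Fobj_ext (fun k => x k + (xs k - x k)) xs) in H by (intros; ring).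
  set (g := grad n W alpha f1 x) in *. set (d := fun k => xs k - x k) in *.
  assert (Hc : 0 < alpha * m) by (apply Rmult_lt_0_compat; lra).
  assert (0 <= dot n g d + alpha * m / 2 * dot n d d + / (2 * (alpha * m)) * dot n g g).
  { unfold dot. rewrite <- !rsum_scal, <- !rsum_plus. apply rsum_nonneg; intros.
    replace (g i * d i + alpha * m / 2 * (d i * d i) + / (2 * (alpha * m)) * (g i * g i))
      with ((alpha * m * d i + g i) ^ 2 * / (2 * (alpha * m))) by (field; lra).
    apply Rmult_le_pos; [apply pow2_ge_0|]. left; apply Rinv_0_lt_compat; lra. }
  assert (Hb : Fobj n W alpha f x - Fobj n W alpha f xs <= / (2 * (alpha * m)) * dot n g g) by lra.
  apply (Rmult_le_compat_l (2 * (alpha * m))) in Hb; [|lra].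
  replace (2 * (alpha * m) * (/ (2 * (alpha * m)) * dot n g g)) with (dot n g g) in Hb by (field; lra).
  lra.
Qed.

Notation DD x := (Ddiag W alpha f2 x).

Lemma D_bounds x i : (i < n)%nat ->
  2 * (1 - Delta) + alpha * m <= DD x i <= 2 * (1 - delta) + alpha * M.
Proof.
  intros Hi. unfold Ddiag. pose proof (hmM i (x i) Hi). pose proof (hWdiag i Hi).
  assert (alpha * m <= alpha * f2 i (x i)) by (apply Rmult_le_compat_l; lra).
  assert (alpha * f2 i (x i) <= alpha * M) by (apply Rmult_le_compat_l; lra).
  lra.
Qed.

Lemma D_pos x i : (i < n)%nat -> 0 < DD x i.
Proof.
  intros Hi. pose proof (D_bounds x i Hi). assert (0 < alpha * m) by (apply Rmult_lt_0_compat; lra). lra.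
Qed.

Definition Amat x (v : vec) i :=
  v i / DD x i + / DD x i * ((1 - 2 * W i i) * (v i / DD x i) + Wv n W (fun j => v j / DD x j) i).

Lemma inv_sqrt_sq a : 0 < a -> / sqrt a * / sqrt a = / a.
Proof. intros. rewrite <- Rinv_mult, sqrt_sqrt; lra. Qed.

Lemma Hinv_eq x v i : (i < n)%nat -> Hinv_apply n W alpha f2 x v i = Amat x v i.
Proof.
  intros Hi. unfold Hinv_apply, Amat. cbv zeta.
  rewrite (rsum_ext n _ (fun j => / sqrt (DD x i) * (Bmat W i j * (v j / DD x j)))).
  2:{ intros j Hj. unfold Rdiv. rewrite <- (inv_sqrt_sq (DD x j)) by (apply D_pos; auto). ring. }
  rewrite rsum_scal.
  assert (E : rsum n (fun j => Bmat W i j * (v j / DD x j)) =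
    (1 - 2 * W i i) * (v i / DD x i) + Wv n W (fun j => v j / DD x j) i).
  { unfold Bmat, Wv. rewrite (rsum_ext n _ (fun j => kron i j * ((1 - 2 * W i i) * (v j / DD x j)) + W i j * (v j / DD x j)))
      by (intros; ring).
    rewrite rsum_plus, rsum_kron' by auto. reflexivity. }
  rewrite E. pose proof (inv_sqrt_sq (DD x i) (D_pos x i Hi)).
  unfold Rdiv. rewrite <- H. ring.
Qed.

Lemma A_lin x u w t i : Amat x (fun k => u k - t * w k) i = Amat x u i - t * Amat x w i.
Proof.
  unfold Amat, Wv.
  rewrite (rsum_ext n _ (fun j => W i j * (u j / DD x j) - t * (W i j * (w j / DD x j)))) by (intros; unfold Rdiv; ring).
  rewrite rsum_minus, rsum_scal. unfold Rdiv. ring.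
Qed.

Definition Bform (y : vec) := rsum n (fun i => (1 - 2 * W i i) * (y i * y i)) + bil n W y y.

Lemma A_form x u v : dot n u (Amat x v) =
  rsum n (fun i => u i * v i / DD x i) + (rsum n (fun i => (1 - 2 * W i i) * ((u i / DD x i) * (v i / DD x i)))
  + bil n W (fun j => u j / DD x j) (fun j => v j / DD x j)).
Proof.
  unfold dot, Amat, bil. rewrite <- !rsum_plus. apply rsum_ext; intros. unfold Rdiv. ring.
Qed.

Lemma A_sym x u v : dot n u (Amat x v) = dot n v (Amat x u).
Proof.
  rewrite !A_form, (bil_sym (fun j => u j / DD x j)). f_equal; [|f_equal]; apply rsum_ext; intros; unfold Rdiv; ring.
Qed.

Lemma sumsq_W y : rsum n (fun i => rsum n (fun j => W i j * (y j * y j))) = dot n y y.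
Proof.
  rewrite rsum_swap. unfold dot. apply rsum_ext; intros j Hj.
  rewrite (rsum_ext n _ (fun i => (y j * y j) * W i j)) by (intros; ring).
  rewrite rsum_scal, colsum by auto; ring.
Qed.

Lemma Bform_nonneg y : 0 <= Bform y.
Proof.
  assert (E : rsum n (fun i => rsum n (fun j => (W i j - kron i j * W i i) * ((y i + y j) * (y i + y j)))) = 2 * Bform y).
  { transitivity (rsum n (fun i => (y i * y i) * rsum n (fun j => W i j) + rsum n (fun j => W i j * (y j * y j))
        + 2 * (y i * Wv n W y i) - rsum n (fun j => kron i j * (W i i * ((y i + y j) * (y i + y j)))))).
    { apply rsum_ext; intros i Hi. unfold Wv. rewrite <- !rsum_scal, <- rsum_plus, <- rsum_plus, <- rsum_minus.
      apply rsum_ext; intros; ring. }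
    rewrite (rsum_ext n _ (fun i => rsum n (fun j => W i j * (y j * y j)) + 2 * ((1 - 2 * W i i) * (y i * y i) + y i * Wv n W y i) - y i * y i)).
    2:{ intros i Hi. rewrite hWrow, rsum_kron' by auto. ring. }
    rewrite rsum_minus, rsum_plus, sumsq_W, rsum_scal, rsum_plus. unfold Bform, bil, dot. ring. }
  assert (0 <= rsum n (fun i => rsum n (fun j => (W i j - kron i j * W i i) * ((y i + y j) * (y i + y j))))).
  { apply rsum_nonneg; intros i Hi; apply rsum_nonneg; intros j Hj. apply Rmult_le_pos.
    - unfold kron. destruct (Nat.eqb_spec i j).
      + subst. lra.
      + pose proof (hWnn i j Hi Hj). lra.
    - apply Rle_0_sqr. }
  lra.
Qed.

Lemma Bform_upper y : Bform y <= 2 * rsum n (fun i => (1 - W i i) * (y i * y i)).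
Proof.
  pose proof (psd_W y). unfold Bform, dot in *.
  rewrite <- rsum_scal.
  assert (rsum n (fun i => (1 - 2 * W i i) * (y i * y i)) =
     rsum n (fun i => 2 * ((1 - W i i) * (y i * y i))) - rsum n (fun i => y i * y i)).
  { rewrite <- rsum_minus. apply rsum_ext; intros; ring. }
  lra.
Qed.

Definition Lamd := (1 + 2 * (1 - delta) / (2 * (1 - delta) + alpha * m)) / (2 * (1 - Delta) + alpha * m).

Lemma A_quad x v : dot n v (Amat x v) = rsum n (fun i => v i * v i / DD x i) + Bform (fun j => v j / DD x j).
Proof. rewrite A_form. reflexivity. Qed.

Lemma A_nonneg x v : 0 <= dot n v (Amat x v).
Proof.
  rewrite A_quad. pose proof (Bform_nonneg (fun j => v j / DD x j)).
  assert (0 <= rsum n (fun i => v i * v i / DD x i)).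
  { apply rsum_nonneg; intros i Hi. unfold Rdiv. apply Rmult_le_pos; [apply Rle_0_sqr|].
    left; apply Rinv_0_lt_compat, D_pos; auto. }
  lra.
Qed.

Lemma A_lower x v : 1 / (2 * (1 - delta) + alpha * M) * dot n v v <= dot n v (Amat x v).
Proof.
  rewrite A_quad. pose proof (Bform_nonneg (fun j => v j / DD x j)).
  assert (1 / (2 * (1 - delta) + alpha * M) * dot n v v <= rsum n (fun i => v i * v i / DD x i)).
  { unfold dot. rewrite <- rsum_scal. apply rsum_le; intros i Hi.
    pose proof (D_bounds x i Hi). pose proof (D_pos x i Hi).
    assert (/ (2 * (1 - delta) + alpha * M) <= / DD x i) by (apply Rinv_le_contravar; lra).
    pose proof (Rle_0_sqr (v i)) as Hv. unfold Rsqr in Hv. unfold Rdiv. nra. }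
  lra.
Qed.

Lemma Rdiv_le_0_compat a b : 0 <= a -> 0 < b -> 0 <= a / b.
Proof. intros. unfold Rdiv. apply Rmult_le_pos; [auto|]. left; apply Rinv_0_lt_compat; auto. Qed.

Lemma frac_le a b c e : 0 <= b <= c -> 0 < e <= a -> b / (a + b) <= c / (c + e).
Proof.
  intros [Hb Hbc] [He Hea].
  assert (E : c / (c + e) - b / (a + b) = (c * a - b * e) / ((a + b) * (c + e))) by (field; lra).
  assert (0 <= (c * a - b * e) / ((a + b) * (c + e))).
  { apply Rdiv_le_0_compat; [nra|]. apply Rmult_lt_0_compat; lra. }
  lra.
Qed.

Lemma A_upper x v : dot n v (Amat x v) <=
  Lamd * dot n v v.
Proof.
  assert (Ham : 0 < alpha * m) by (apply Rmult_lt_0_compat; lra).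
  rewrite A_quad. pose proof (Bform_upper (fun j => v j / DD x j)).
  assert (rsum n (fun i => v i * v i / DD x i) + 2 * rsum n (fun i => (1 - W i i) * (v i / DD x i * (v i / DD x i)))
     <= Lamd * dot n v v).
  { unfold dot. rewrite <- !rsum_scal, <- rsum_plus. apply rsum_le; intros i Hi.
    pose proof (D_bounds x i Hi). pose proof (D_pos x i Hi). pose proof (hWdiag i Hi). pose proof (hmM i (x i) Hi).
    assert (Hq : 2 * (1 - W i i) / DD x i <= 2 * (1 - delta) / (2 * (1 - delta) + alpha * m)).
    { unfold Ddiag. replace (alpha * f2 i (x i) + 2 * (1 - W i i)) with (alpha * f2 i (x i) + 2 * (1 - W i i)) by ring.
      apply frac_le; [lra|]. split; [apply Rmult_lt_0_compat; lra|]. apply Rmult_le_compat_l; lra. }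
    assert (Hp : / DD x i <= / (2 * (1 - Delta) + alpha * m)) by (apply Rinv_le_contravar; lra).
    assert (Hk : / DD x i * (1 + 2 * (1 - W i i) / DD x i) <= Lamd).
    { replace Lamd with (/ (2 * (1 - Delta) + alpha * m) * (1 + 2 * (1 - delta) / (2 * (1 - delta) + alpha * m)))
        by (unfold Lamd; unfold Rdiv at 2; ring).
      assert (0 <= 2 * (1 - W i i) / DD x i) by (apply Rdiv_le_0_compat; lra).
      apply Rmult_le_compat; try lra.
      left; apply Rinv_0_lt_compat; lra. }
    pose proof (Rle_0_sqr (v i)) as Hv. unfold Rsqr in Hv.
    replace (v i * v i / DD x i + 2 * ((1 - W i i) * (v i / DD x i * (v i / DD x i))))
      with ((v i * v i) * (/ DD x i * (1 + 2 * (1 - W i i) / DD x i))) by (field; lra).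
    rewrite (Rmult_comm Lamd). apply Rmult_le_compat_l; auto. }
  lra.
Qed.

Lemma dot_expand u v p q t : dot n (fun k => u k - t * v k) (fun k => p k - t * q k) =
  dot n u p - t * dot n u q - t * dot n v p + t ^ 2 * dot n v q.
Proof.
  unfold dot. rewrite <- !rsum_scal, <- !rsum_minus, <- rsum_plus. apply rsum_ext; intros; ring.
Qed.

Lemma dot_ext u v u' v' : (forall i, (i < n)%nat -> u i * v i = u' i * v' i) -> dot n u v = dot n u' v'.
Proof. intros; apply rsum_ext; auto. Qed.

Lemma A_sq x g : (0 < n)%nat ->
  dot n (Amat x g) (Amat x g) <=
  Lamd * dot n g (Amat x g).
Proof.
  intros Hn.
  assert (HL : 0 < Lamd).
  { unfold Lamd. assert (0 < alpha * m) by (apply Rmult_lt_0_compat; lra).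
    assert (0 <= 2 * (1 - delta) / (2 * (1 - delta) + alpha * m)) by (apply Rdiv_le_0_compat; lra).
    apply Rdiv_lt_0_compat; lra. }
  pose proof (A_nonneg x (fun k => g k - / Lamd * Amat x g k)) as H.
  rewrite (dot_ext _ (Amat x (fun k => g k - / Lamd * Amat x g k)) _ (fun k => Amat x g k - / Lamd * Amat x (Amat x g) k)) in H
    by (intros; rewrite A_lin; reflexivity).
  rewrite dot_expand in H.
  rewrite (A_sym x g (Amat x g)) in H.
  pose proof (A_upper x (Amat x g)) as H0.
  assert (H1 : 0 <= dot n (Amat x g) (Amat x g)) by (unfold dot; apply rsum_nonneg; intros; apply Rle_0_sqr).
  assert (H3 : (/ Lamd) ^ 2 * dot n (Amat x g) (Amat x (Amat x g)) <= (/ Lamd) ^ 2 * (Lamd * dot n (Amat x g) (Amat x g)))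
    by (apply Rmult_le_compat_l; [apply pow2_ge_0|auto]).
  replace ((/ Lamd) ^ 2 * (Lamd * dot n (Amat x g) (Amat x g))) with (/ Lamd * dot n (Amat x g) (Amat x g)) in H3 by (field; lra).
  assert (H2 : 0 <= dot n g (Amat x g) - / Lamd * dot n (Amat x g) (Amat x g)) by lra.
  apply (Rmult_le_compat_l Lamd) in H2; [|lra].
  replace (Lamd * (dot n g (Amat x g) - / Lamd * dot n (Amat x g) (Amat x g)))
    with (Lamd * dot n g (Amat x g) - dot n (Amat x g) (Amat x g)) in H2 by (field; lra).
  lra.
Qed.

Definition lamd := 1 / (2 * (1 - delta) + alpha * M).

Lemma step_eq eps x i k : step n W alpha f1 f2 eps x i k =
  x k + (- eps * Hinv_apply n W alpha f2 x (grad n W alpha f1 x) i) * kron k i.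
Proof. unfold step, kron. destruct (Nat.eqb_spec k i); subst; ring. Qed.

Lemma descent eps x : 0 < eps ->
  rsum n (fun i => Fobj n W alpha f (step n W alpha f1 f2 eps x i)) <=
  INR n * Fobj n W alpha f x - eps * dot n (grad n W alpha f1 x) (Amat x (grad n W alpha f1 x))
  + eps ^ 2 * (2 * (1 - delta) + alpha * M) / 2 * dot n (Amat x (grad n W alpha f1 x)) (Amat x (grad n W alpha f1 x)).
Proof.
  intros He.
  transitivity (rsum n (fun i => Fobj n W alpha f x - eps * (grad n W alpha f1 x i * Amat x (grad n W alpha f1 x) i)
     + eps ^ 2 * (2 * (1 - delta) + alpha * M) / 2 * (Amat x (grad n W alpha f1 x) i * Amat x (grad n W alpha f1 x) i))).
  - apply rsum_le; intros i Hi.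
    rewrite (Fobj_ext _ (fun k => x k + (- eps * Amat x (grad n W alpha f1 x) i) * kron k i)).
    2:{ intros k Hk. rewrite step_eq, Hinv_eq by auto. reflexivity. }
    eapply Rle_trans; [apply F_coord; auto|].
    pose proof (hWdiag i Hi).
    assert (0 <= (- eps * Amat x (grad n W alpha f1 x) i) ^ 2) by apply pow2_ge_0.
    assert ((- eps * Amat x (grad n W alpha f1 x) i) ^ 2 * (1 - W i i + alpha * M) <=
            (- eps * Amat x (grad n W alpha f1 x) i) ^ 2 * (2 * (1 - delta) + alpha * M))
      by (apply Rmult_le_compat_l; lra).
    replace (eps ^ 2 * (2 * (1 - delta) + alpha * M) / 2 * (Amat x (grad n W alpha f1 x) i * Amat x (grad n W alpha f1 x) i))
      with ((- eps * Amat x (grad n W alpha f1 x) i) ^ 2 * (2 * (1 - delta) + alpha * M) / 2) by field.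
    lra.
  - rewrite rsum_plus, rsum_minus, rsum_const, !rsum_scal. unfold dot. lra.
Qed.

Lemma contract eps x : (0 < n)%nat -> 0 < eps -> 0 < 2 * lamd ^ 2 - eps * Lamd ^ 2 ->
  / INR n * rsum n (fun i => Fobj n W alpha f (step n W alpha f1 f2 eps x i) - Fobj n W alpha f xs) <=
  (1 - alpha * m * eps * (2 * lamd ^ 2 - eps * Lamd ^ 2) / (INR n * lamd)) * (Fobj n W alpha f x - Fobj n W alpha f xs).
Proof.
  intros Hn He Hk.
  pose proof (Mpos Hn) as HM.
  assert (Ham : 0 < alpha * m) by (apply Rmult_lt_0_compat; lra).
  assert (HaM : 0 < alpha * M) by (apply Rmult_lt_0_compat; lra).
  assert (HK : 0 < 2 * (1 - delta) + alpha * M) by lra.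
  assert (Hlam : lamd = / (2 * (1 - delta) + alpha * M)) by (unfold lamd; field; lra).
  assert (Hl0 : 0 < lamd) by (rewrite Hlam; apply Rinv_0_lt_compat; lra).
  assert (HL : 0 < Lamd).
  { unfold Lamd. assert (0 <= 2 * (1 - delta) / (2 * (1 - delta) + alpha * m)) by (apply Rdiv_le_0_compat; lra).
    apply Rdiv_lt_0_compat; lra. }
  assert (Hnr : 0 < INR n) by (apply lt_0_INR; auto).
  pose proof (descent eps x He) as D.
  pose proof (A_lower x (grad n W alpha f1 x)) as H1. fold lamd in H1.
  pose proof (A_sq x (grad n W alpha f1 x) Hn) as H2. fold Lamd in H2.
  pose proof (A_upper x (grad n W alpha f1 x)) as H3. fold Lamd in H3.
  pose proof (grad_bound x) as H4.
  remember (dot n (grad n W alpha f1 x) (grad n W alpha f1 x)) as G.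
  remember (dot n (grad n W alpha f1 x) (Amat x (grad n W alpha f1 x))) as P.
  remember (dot n (Amat x (grad n W alpha f1 x)) (Amat x (grad n W alpha f1 x))) as U.
  remember (Fobj n W alpha f x) as Fx. remember (Fobj n W alpha f xs) as Fs.
  assert (HU : U <= Lamd ^ 2 * G).
  { assert (Lamd * P <= Lamd * (Lamd * G)) by (apply Rmult_le_compat_l; lra). nra. }
  assert (E0 : rsum n (fun i => Fobj n W alpha f (step n W alpha f1 f2 eps x i) - Fs) =
     rsum n (fun i => Fobj n W alpha f (step n W alpha f1 f2 eps x i)) - INR n * Fs)
    by (rewrite rsum_minus, rsum_const; ring).
  rewrite E0.
  assert (HP : eps * (lamd * G) <= eps * P) by (apply Rmult_le_compat_l; lra).
  assert (HU2 : eps ^ 2 * (2 * (1 - delta) + alpha * M) / 2 * U <= eps ^ 2 * (2 * (1 - delta) + alpha * M) / 2 * (Lamd ^ 2 * G)).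
  { apply Rmult_le_compat_l; auto. assert (0 < eps ^ 2) by (apply pow_lt; lra).
    apply Rmult_le_pos; [|lra]. apply Rmult_le_pos; lra. }
  set (c := eps * (2 * lamd ^ 2 - eps * Lamd ^ 2) / (2 * lamd)).
  assert (Ec : eps * (lamd * G) - eps ^ 2 * (2 * (1 - delta) + alpha * M) / 2 * (Lamd ^ 2 * G) = c * G).
  { unfold c. rewrite Hlam. field. lra. }
  assert (Hc : 0 < c).
  { unfold c. apply Rdiv_lt_0_compat; [apply Rmult_lt_0_compat|]; lra. }
  assert (HG : c * (2 * alpha * m * (Fx - Fs)) <= c * G) by (apply Rmult_le_compat_l; lra).
  assert (Hsum : rsum n (fun i => Fobj n W alpha f (step n W alpha f1 f2 eps x i)) - INR n * Fs <=
     INR n * (Fx - Fs) - c * (2 * alpha * m * (Fx - Fs))) by lra.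
  assert (Hcdef : c = eps * (2 * lamd ^ 2 - eps * Lamd ^ 2) / (2 * lamd)) by reflexivity.
  clearbody c.
  apply (Rmult_le_compat_l (/ INR n)) in Hsum; [|left; apply Rinv_0_lt_compat; lra].
  eapply Rle_trans; [exact Hsum|].
  right. rewrite Hcdef. field. lra.
Qed.

Lemma seqsum_le N t : forall Z Z', (forall l, Z l <= Z' l) -> seqsum N t Z <= seqsum N t Z'.
Proof. induction t; simpl; intros Z Z' H; auto. apply rsum_le; intros; apply IHt; auto. Qed.

Lemma seqsum_lin N t : forall Z Y a b,
  seqsum N t (fun l => a * Z l + b * Y l) = a * seqsum N t Z + b * seqsum N t Y.
Proof.
  induction t; simpl; intros; auto.
  rewrite (rsum_ext N _ (fun i => a * seqsum N t (fun l => Z (i :: l)) + b * seqsum N t (fun l => Y (i :: l))))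
    by (intros; apply IHt).
  rewrite rsum_plus, !rsum_scal; ring.
Qed.

Lemma seqsum_const N t c : seqsum N t (fun _ => c) = c * INR N ^ t.
Proof.
  induction t; simpl; [ring|].
  rewrite (rsum_ext N _ (fun _ => c * INR N ^ t)) by (intros; apply IHt).
  rewrite rsum_const; ring.
Qed.

Lemma expect_le N t Z Z' : (0 < N)%nat -> (forall l, Z l <= Z' l) -> expect N t Z <= expect N t Z'.
Proof.
  intros HN H. unfold expect, Rdiv. apply Rmult_le_compat_r.
  - left; apply Rinv_0_lt_compat, pow_lt, lt_0_INR; auto.
  - apply seqsum_le; auto.
Qed.

Lemma expect_lin N t Z Y a b : expect N t (fun l => a * Z l + b * Y l) = a * expect N t Z + b * expect N t Y.
Proof. unfold expect. rewrite seqsum_lin. unfold Rdiv; ring. Qed.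

Lemma expect_const N t c : (0 < N)%nat -> expect N t (fun _ => c) = c.
Proof.
  intros HN. unfold expect. rewrite seqsum_const. field. apply pow_nonzero.
  apply not_0_INR; lia.
Qed.

Lemma expect_S N t Z : (0 < N)%nat ->
  expect N (S t) Z = / INR N * rsum N (fun i => expect N t (fun l => Z (i :: l))).
Proof.
  intros HN. unfold expect. simpl seqsum.
  rewrite (rsum_ext N (fun i => seqsum N t (fun l => Z (i :: l)) / INR N ^ t) (fun i => / INR N ^ t * seqsum N t (fun l => Z (i :: l)))) by (intros; unfold Rdiv; ring).
  rewrite rsum_scal. simpl pow. field. split; [apply pow_nonzero|]; apply not_0_INR; lia.
Qed.

Lemma expect_sqrt N t Y : (0 < N)%nat -> (forall l, 0 <= Y l) ->
  expect N t (fun l => sqrt (Y l)) <= sqrt (expect N t Y).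
Proof.
  intros HN HY.
  remember (expect N t (fun l => sqrt (Y l))) as c.
  assert (H0 : 0 <= expect N t (fun l => 1 * (1 * Y l + (- 2 * c) * sqrt (Y l)) + c ^ 2 * 1)).
  { rewrite <- (expect_const N t 0 HN). apply expect_le; auto. intros l.
    replace (1 * (1 * Y l + - 2 * c * sqrt (Y l)) + c ^ 2 * 1) with ((sqrt (Y l) - c) ^ 2).
    - apply pow2_ge_0.
    - pose proof (sqrt_sqrt (Y l) (HY l)). nra. }
  rewrite expect_lin, expect_lin, expect_const in H0 by auto.
  rewrite <- Heqc in H0.
  destruct (Rle_or_lt c 0).
  - pose proof (sqrt_pos (expect N t Y)). lra.
  - rewrite <- (sqrt_square c) by lra. apply sqrt_le_1_alt. nra.
Qed.

Lemma key eps : (0 < n)%nat -> 0 < eps -> 0 < 2 * lamd ^ 2 - eps * Lamd ^ 2 ->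
  0 <= 1 - alpha * m * eps * (2 * lamd ^ 2 - eps * Lamd ^ 2) / (INR n * lamd) ->
  forall t x0, expect n t (fun l => Fobj n W alpha f (run n W alpha f1 f2 eps x0 l) - Fobj n W alpha f xs)
    <= (1 - alpha * m * eps * (2 * lamd ^ 2 - eps * Lamd ^ 2) / (INR n * lamd)) ^ t * (Fobj n W alpha f x0 - Fobj n W alpha f xs).
Proof.
  intros Hn He Hk Hb.
  induction t; intros x0.
  - unfold expect. simpl. unfold run. simpl. lra.
  - rewrite expect_S by auto.
    set (q := 1 - alpha * m * eps * (2 * lamd ^ 2 - eps * Lamd ^ 2) / (INR n * lamd)) in *.
    assert (Hq : 0 <= q ^ t) by (apply pow_le; auto).
    assert (Hnr : 0 < / INR n) by (apply Rinv_0_lt_compat, lt_0_INR; auto).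
    apply Rle_trans with (/ INR n * rsum n (fun i => q ^ t * (Fobj n W alpha f (step n W alpha f1 f2 eps x0 i) - Fobj n W alpha f xs))).
    + apply Rmult_le_compat_l; [lra|]. apply rsum_le; intros i Hi. apply (IHt (step n W alpha f1 f2 eps x0 i)).
    + rewrite rsum_scal.
      pose proof (contract eps x0 Hn He Hk). fold q in H.
      apply (Rmult_le_compat_l (q ^ t)) in H; auto.
      simpl pow. lra.
Qed.

Lemma final_pt xp xt : (0 < n)%nat ->
  rsum n (fun i => (sqrt (Ddiag W alpha f2 xp i) * (xt i - xs i)) ^ 2) <=
  2 * (2 * (1 - delta) + alpha * M) / (alpha * m) * (Fobj n W alpha f xt - Fobj n W alpha f xs).
Proof.
  intros Hn.
  assert (Ham : 0 < alpha * m) by (apply Rmult_lt_0_compat; lra).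
  pose proof (dist_bound xt) as Hd.
  apply Rle_trans with ((2 * (1 - delta) + alpha * M) * dot n (fun k => xt k - xs k) (fun k => xt k - xs k)).
  - unfold dot. rewrite <- rsum_scal. apply rsum_le; intros i Hi.
    pose proof (D_bounds xp i Hi). pose proof (D_pos xp i Hi).
    replace ((sqrt (Ddiag W alpha f2 xp i) * (xt i - xs i)) ^ 2) with (Ddiag W alpha f2 xp i * ((xt i - xs i) * (xt i - xs i))).
    + apply Rmult_le_compat_r; [apply Rle_0_sqr|lra].
    + pose proof (sqrt_sqrt (Ddiag W alpha f2 xp i)). rewrite <- H1 at 1 by lra. ring.
  - assert (HK : 0 < 2 * (1 - delta) + alpha * M).
    { pose proof (Mpos Hn). assert (0 < alpha * M) by (apply Rmult_lt_0_compat; lra). lra. }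
    apply (Rmult_le_compat_l (2 * (2 * (1 - delta) + alpha * M) / (alpha * m))) in Hd.
    2:{ apply Rdiv_le_0_compat; lra. }
    replace (2 * (2 * (1 - delta) + alpha * M) / (alpha * m) * (alpha * m / 2 * dot n (fun k => xt k - xs k) (fun k => xt k - xs k)))
      with ((2 * (1 - delta) + alpha * M) * dot n (fun k => xt k - xs k) (fun k => xt k - xs k)) in Hd by (field; lra).
    auto.
Qed.
End Prob.

Lemma seqsum_scal N t : forall Z c, seqsum N t (fun l => c * Z l) = c * seqsum N t Z.
Proof.
  induction t; simpl; intros; auto.
  rewrite (rsum_ext N _ (fun i => c * seqsum N t (fun l => Z (i :: l)))) by (intros; apply IHt).
  apply rsum_scal.
Qed.

Lemma expect_scal N t Z c : expect N t (fun l => c * Z l) = c * expect N t Z.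
Proof. unfold expect. rewrite seqsum_scal. unfold Rdiv; ring. Qed.

Theorem mainTheorem8
  (n : nat) (hn : (2 <= n)%nat)
  (alpha : R) (halpha : 0 < alpha)
  (W : nat -> nat -> R) (delta Delta : R)
  (hdelta : 0 < delta) (hdD : delta <= Delta) (hDelta : Delta < 1)
  (hWsym : forall i j, (i < n)%nat -> (j < n)%nat -> W i j = W j i)
  (hWnn : forall i j, (i < n)%nat -> (j < n)%nat -> 0 <= W i j)
  (hWlt1 : forall i j, (i < n)%nat -> (j < n)%nat -> W i j < 1)
  (hWrow : forall i, (i < n)%nat -> rsum n (fun j => W i j) = 1)
  (hWnull : forall v : vec,
      (forall i, (i < n)%nat -> v i - rsum n (fun j => W i j * v j) = 0) ->
      exists c : R, forall i, (i < n)%nat -> v i = c)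
  (hWdiag : forall i, (i < n)%nat -> delta <= W i i <= Delta)
  (f f1 f2 : nat -> R -> R) (m M L : R)
  (hf1 : forall i s, (i < n)%nat -> derivable_pt_lim (f i) s (f1 i s))
  (hf2 : forall i s, (i < n)%nat -> derivable_pt_lim (f1 i) s (f2 i s))
  (hf2c : forall i, (i < n)%nat -> continuity (f2 i))
  (hm : 0 < m)
  (hmM : forall i s, (i < n)%nat -> m <= f2 i s <= M)
  (hL : forall i a b, (i < n)%nat -> Rabs (f2 i a - f2 i b) <= L * Rabs (a - b))
  (xs : vec) (hxs : forall y : vec, Fobj n W alpha f xs <= Fobj n W alpha f y)
  (x0 : vec) (eps : R) :
  let rho := 2 * (1 - delta) / (2 * (1 - delta) + alpha * m) in
  let Lam := (1 + rho) / (2 * (1 - Delta) + alpha * m) in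
  let lam := 1 / (2 * (1 - delta) + alpha * M) in
  let beta := alpha * m * eps * (2 * lam ^ 2 - eps * Lam ^ 2) / (INR n * lam) in
  0 < eps -> eps < Rmin 1 (2 * (lam / Lam) ^ 2) ->
  (0 < beta < 1) /\
  forall t : nat, (1 <= t)%nat ->
    expect n t (fun l =>
      let xprev := run n W alpha f1 f2 eps x0 (removelast l) in
      let xt := run n W alpha f1 f2 eps x0 l in
      sqrt (rsum n (fun i =>
        (sqrt (Ddiag W alpha f2 xprev i) * (xt i - xs i)) ^ 2)))
    <= sqrt (2 * (2 * (1 - delta) + alpha * M) * (1 - beta) ^ t / (alpha * m)
             * (Fobj n W alpha f x0 - Fobj n W alpha f xs)).
Proof.
  cbv zeta. intros He Heps.
  change (1 / (2 * (1 - delta) + alpha * M)) with (lamd alpha M delta).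
  change ((1 + 2 * (1 - delta) / (2 * (1 - delta) + alpha * m)) / (2 * (1 - Delta) + alpha * m))
    with (Lamd alpha m delta Delta).
  assert (Hn : (0 < n)%nat) by lia.
  pose proof (Mpos n f2 m M hm hmM Hn) as HM.
  assert (Ham : 0 < alpha * m) by (apply Rmult_lt_0_compat; lra).
  assert (HaM : 0 < alpha * M) by (apply Rmult_lt_0_compat; lra).
  assert (HmM : m <= M) by (pose proof (hmM 0%nat 0 Hn); lra).
  assert (HamM : alpha * m <= alpha * M) by (apply Rmult_le_compat_l; lra).
  assert (HK : 0 < 2 * (1 - delta) + alpha * M) by lra.
  assert (Hl0 : 0 < lamd alpha M delta) by (unfold lamd; apply Rdiv_lt_0_compat; lra).
  assert (HL0 : 0 < Lamd alpha m delta Delta).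
  { unfold Lamd. assert (0 <= 2 * (1 - delta) / (2 * (1 - delta) + alpha * m)) by (apply Rdiv_le_0_compat; lra).
    apply Rdiv_lt_0_compat; lra. }
  set (l := lamd alpha M delta) in *. set (Lm := Lamd alpha m delta Delta) in *.
  assert (He1 : eps < 1) by (eapply Rlt_le_trans; [exact Heps|apply Rmin_l]).
  assert (He2 : eps < 2 * (l / Lm) ^ 2) by (eapply Rlt_le_trans; [exact Heps|apply Rmin_r]).
  assert (Hk : 0 < 2 * l ^ 2 - eps * Lm ^ 2).
  { assert (eps * Lm ^ 2 < 2 * (l / Lm) ^ 2 * Lm ^ 2) by (apply Rmult_lt_compat_r; [apply pow_lt|]; lra).
    replace (2 * (l / Lm) ^ 2 * Lm ^ 2) with (2 * l ^ 2) in H by (field; lra). lra. }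
  assert (Hnr : 2 <= INR n) by (replace 2 with (INR 2) by (simpl; ring); apply le_INR; auto).
  assert (Hal : alpha * m * l < 1).
  { unfold l, lamd. replace (alpha * m * (1 / (2 * (1 - delta) + alpha * M))) with (alpha * m / (2 * (1 - delta) + alpha * M)) by (field; lra).
    apply (Rmult_lt_reg_r (2 * (1 - delta) + alpha * M)); [lra|]. unfold Rdiv. rewrite Rmult_assoc, Rinv_l by lra. lra. }
  assert (Hb0 : 0 < alpha * m * eps * (2 * l ^ 2 - eps * Lm ^ 2) / (INR n * l)).
  { apply Rdiv_lt_0_compat.
    - apply Rmult_lt_0_compat; [apply Rmult_lt_0_compat|]; lra.
    - apply Rmult_lt_0_compat; lra. }
  assert (Hb1 : alpha * m * eps * (2 * l ^ 2 - eps * Lm ^ 2) / (INR n * l) < 1).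
  { assert (H1 : alpha * m * eps * (2 * l ^ 2 - eps * Lm ^ 2) <= alpha * m * eps * (2 * l ^ 2)).
    { apply Rmult_le_compat_l; [apply Rmult_le_pos; lra|].
      assert (0 <= eps * Lm ^ 2) by (apply Rmult_le_pos; [lra|apply pow2_ge_0]). lra. }
    assert (H2 : alpha * m * eps * (2 * l ^ 2) < alpha * m * (2 * l ^ 2)).
    { rewrite (Rmult_assoc (alpha * m)). apply Rmult_lt_compat_l; [lra|].
      rewrite <- (Rmult_1_l (2 * l ^ 2)) at 2. apply Rmult_lt_compat_r; [|lra].
      apply Rmult_lt_0_compat; [lra|apply pow_lt; lra]. }
    assert (H3 : alpha * m * (2 * l ^ 2) = 2 * l * (alpha * m * l)) by ring.
    assert (H4 : 2 * l * (alpha * m * l) <= 2 * l * 1) by (apply Rmult_le_compat_l; lra).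
    assert (H5 : 2 * l <= INR n * l) by (apply Rmult_le_compat_r; lra).
    apply (Rmult_lt_reg_r (INR n * l)); [apply Rmult_lt_0_compat; lra|].
    unfold Rdiv. rewrite Rmult_assoc, Rinv_l by (apply Rgt_not_eq; apply Rmult_lt_0_compat; lra). lra. }
  split; [split; auto|].
  intros t Ht.
  set (K2 := 2 * (2 * (1 - delta) + alpha * M) / (alpha * m)).
  assert (HK2 : 0 <= K2) by (unfold K2; apply Rdiv_le_0_compat; lra).
  eapply Rle_trans.
  { apply expect_le with (Z' := fun l0 => sqrt (K2 * (Fobj n W alpha f (run n W alpha f1 f2 eps x0 l0) - Fobj n W alpha f xs))); [auto|].
    intros l0. apply sqrt_le_1_alt.
    apply (final_pt n W alpha f f1 f2 m M delta Delta halpha hdD hDelta hWsym hWnn hWrow hWdiag hf1 hf2 hm hmM xs hxs); auto. }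
  eapply Rle_trans.
  { apply expect_sqrt; auto. intros l0. apply Rmult_le_pos; auto. pose proof (hxs (run n W alpha f1 f2 eps x0 l0)). lra. }
  apply sqrt_le_1_alt.
  rewrite expect_scal.
  assert (Hb2 : 0 <= 1 - alpha * m * eps * (2 * l ^ 2 - eps * Lm ^ 2) / (INR n * l)) by lra.
  pose proof (key n W alpha f f1 f2 m M delta Delta halpha hdD hDelta hWsym hWnn hWrow hWdiag hf1 hf2 hm hmM xs eps Hn He Hk
     Hb2 t x0) as HKey.
  fold l Lm in HKey.
  apply Rle_trans with (K2 * ((1 - alpha * m * eps * (2 * l ^ 2 - eps * Lm ^ 2) / (INR n * l)) ^ t * (Fobj n W alpha f x0 - Fobj n W alpha f xs))).
  - apply Rmult_le_compat_l; auto.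
  - right. unfold K2. field. lra.
Qed.
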